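(* For any schema $\mathrm{Sch}$ with constraints $\Sigma$ and result-bounded methods, a Boolean conjunctive query $Q$ is access monotonically-determined over $\mathrm{Sch}$ if and only if the following holds: for any two instances $I_1,I_2$ satisfying $\Sigma$, if $I_1$ and $I_2$ have a common subinstance $I_{\mathrm{acc}}$ that is access-valid in $I_1$, then $Q(I_1)\subseteq Q(I_2)$.
   Context: Instances are finite or infinite sets of facts; $\mathrm{Adom}(I)$ is the set of values occurring in $I$; a subinstance is a subset of the facts. A schema $\mathrm{Sch}$ consists of a relational signature, constraints $\Sigma$ (first-order sentences), and access methods; each method $\mathrm{mt}$ is associated with a relation $R$ and a set of input positions of $R$ and may have a result bound $k\in\mathbb{N}_{>0}$. An access on $I$ is $(\mathrm{mt},\mathrm{AccBind})$ with $\mathrm{AccBind}$ mapping the input positions of $\mathrm{mt}$ to $\mathrm{Adom}(I)$; matching tuples $M$ are the $R$-tuples of $I$ agreeing with $\mathrm{AccBind}$ on the input positions. $J\subseteq M$ is a valid output if $J=M$ when there is no bound, and when there is result bound $k$, $|J|\le k$ and for all $j\le k$, $|M|\ge j$ implies $|J|\ge j$. An access selection maps each access to matching tuples; it is valid if all its images are valid outputs. For a valid access selection $\sigma$ on $I$: $\mathrm{AccPart}_0=\mathrm{accessible}_0=\emptyset$; $\mathrm{AccPart}_{i+1}$ is the union of the facts $\sigma(\mathrm{mt},\mathrm{AccBind})$ over all methods and all bindings with values in $\mathrm{accessible}_i$; $\mathrm{accessible}_{i+1}=\mathrm{Adom}(\mathrm{AccPart}_{i+1})$; an accessible part of $I$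 is $\bigcup_i\mathrm{AccPart}_i$ for some valid $\sigma$. $Q$ is access monotonically-determined over $\mathrm{Sch}$ if for all $I_1,I_2$ satisfying $\Sigma$, whenever some accessible part of $I_1$ is a subset of some accessible part of $I_2$, $Q(I_1)\subseteq Q(I_2)$. A subinstance $I_{\mathrm{acc}}$ of $I_1$ is access-valid in $I_1$ if for every access $(\mathrm{mt},\mathrm{AccBind})$ with a method of $\mathrm{Sch}$ and a binding with values in $\mathrm{Adom}(I_{\mathrm{acc}})$, there is a set $J$ of matching tuples contained in $I_{\mathrm{acc}}$ that is a valid output to that access in $I_1$. *)

(* Defs.v *)
From mathcomp Require Import all_boot.
From Stdlib Require List.

Set Implicit Arguments.
Unset Strict Implicit.
Unset Printing Implicit Defensive.

Record signature := Signature { Rel : finType; arity : Rel -> nat }.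

Section Formulas.
Variable sg : signature.

Inductive formula :=
| FAtom (r : Rel sg) (xs : (arity r).-tuple nat)
| FEq (x y : nat)
| FTrue
| FFalse
| FNot (p : formula)
| FAnd (p q : formula)
| FOr (p q : formula)
| FImp (p q : formula)
| FEx (x : nat) (p : formula)
| FAll (x : nat) (p : formula).

Fixpoint free (x : nat) (p : formula) : Prop :=
  match p with
  | FAtom r xs => exists i, tnth xs i = x
  | FEq a b => x = a \/ x = b
  | FTrue | FFalse => False
  | FNot p => free x p
  | FAnd p q | FOr p q | FImp p q => free x p \/ free x q
  | FEx y p | FAll y p => x <> y /\ free x p
  end.

Definition sentence (p : formula) : Prop := forall x, ~ free x p.

Record bcq := BCQ { cq_atoms : list {r : Rel sg & (arity r).-tuple nat} }.

Variable D : Type.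

Definition tup (r : Rel sg) := (arity r).-tuple D.

Record fact := Fact { frel : Rel sg; fargs : tup frel }.
Definition instance := fact -> Prop.

Definition Adom (I : instance) (v : D) : Prop :=
  exists f i, I f /\ tnth (fargs f) i = v.

Definition subinst (I J : instance) : Prop := forall f, I f -> J f.

Definition upd (env : nat -> D) (x : nat) (d : D) : nat -> D :=
  fun y => if y == x then d else env y.

(* Standard Tarskian semantics; quantifiers range over the value domain D. *)
Fixpoint holds (I : instance) (env : nat -> D) (p : formula) : Prop :=
  match p with
  | FAtom r xs => I (@Fact r (map_tuple env xs))
  | FEq a b => env a = env b
  | FTrue => True
  | FFalse => False
  | FNot p => ~ holds I env p
  | FAnd p q => holds I env p /\ holds I env q
  | FOr p q => holds I env p \/ holds I env q
  | FImp p q => holds I env p -> holds I env q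
  | FEx x p => exists d, holds I (upd env x d) p
  | FAll x p => forall d, holds I (upd env x d) p
  end.

Definition models (I : instance) (p : formula) : Prop :=
  forall env, holds I env p.

Definition cq_holds (I : instance) (q : bcq) : Prop :=
  exists env : nat -> D, forall a, List.In a (cq_atoms q) ->
    I (@Fact (projT1 a) (map_tuple env (projT2 a))).

End Formulas.

Definition atleast (T : Type) (j : nat) (P : T -> Prop) : Prop :=
  exists s : list T, List.length s = j /\ List.NoDup s /\ forall x, List.In x s -> P x.
Definition atmost (T : Type) (k : nat) (P : T -> Prop) : Prop :=
  exists s : list T, List.length s <= k /\ forall x, P x -> List.In x s.

Record schema := Schema {
  ssig : signature;
  Meth : finType;
  mrel : Meth -> Rel ssig;
  minp : forall m : Meth, {set 'I_(@arity ssig (mrel m))};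
  mbound : Meth -> option nat;
  mbound_pos : forall m k, mbound m = Some k -> 0 < k;
  constraints : list (formula ssig);
  constraints_sentences : forall p, List.In p constraints -> sentence p
}.

Section Access.
Variable Sch : schema.
Variable D : Type.

Local Notation sg := (ssig Sch).
Local Notation tupm m := (@tup sg D (mrel m)).
Local Notation inst := (@instance sg D).

Definition binding (m : Meth Sch) :=
  {ffun {i : 'I_(@arity sg (mrel m)) | i \in minp m} -> D}.

Definition binding_in (P : D -> Prop) m (b : binding m) : Prop :=
  forall i, P (b i).

Definition matching (I : inst) m (b : binding m) (t : tupm m) : Prop :=
  I (@Fact sg D (mrel m) t) /\ forall i, tnth t (val i) = b i.

Definition valid_output (I : inst) m (b : binding m) (J : tupm m -> Prop) : Prop :=
  (forall t, J t -> matching I b t) /\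
  match mbound m with
  | None => forall t, matching I b t -> J t
  | Some k => atmost k J /\
              forall j, j <= k -> atleast j (matching I b) -> atleast j J
  end.

Definition selection := forall m : Meth Sch, binding m -> tupm m -> Prop.

Definition valid_selection (I : inst) (sigma : selection) : Prop :=
  forall m (b : binding m), binding_in (Adom I) b -> valid_output I b (sigma m b).

Fixpoint AccPart (sigma : selection) (n : nat) : inst :=
  match n with
  | 0 => fun _ => False
  | n.+1 => fun f => exists m (b : binding m) (t : tupm m),
       binding_in (Adom (AccPart sigma n)) b /\ sigma m b t /\
       f = @Fact sg D (mrel m) t
  end.

Definition accessible_of (sigma : selection) : inst :=
  fun f => exists n, AccPart sigma n f.

Definition is_accessible_part (I A : inst) : Prop :=
  exists sigma, valid_selection I sigma /\
    forall f, A f <-> accessible_of sigma f.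

Definition satisfies (I : inst) : Prop :=
  forall p, List.In p (constraints Sch) -> models I p.

Definition AMonDet (Q : bcq sg) : Prop :=
  forall I1 I2 : inst, satisfies I1 -> satisfies I2 ->
    (exists A1 A2, is_accessible_part I1 A1 /\ is_accessible_part I2 A2 /\
                   subinst A1 A2) ->
    cq_holds I1 Q -> cq_holds I2 Q.

Definition access_valid (I1 Iacc : inst) : Prop :=
  subinst Iacc I1 /\
  forall m (b : binding m), binding_in (Adom Iacc) b ->
    exists J : tupm m -> Prop,
      (forall t, J t -> Iacc (@Fact sg D (mrel m) t)) /\ valid_output I1 b J.

End Access.

(* Main.v *)
Require Import Defs.
From mathcomp Require Import all_boot zify.
From Stdlib Require Import List Classical ClassicalEpsilon.

Lemma gen_ext (T : Type) (M S : T -> Prop) (k : nat) :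
  (forall t, S t -> M t) -> atmost k S ->
  exists J : T -> Prop, (forall t, J t -> M t) /\ atmost k J /\
    (forall j, j <= k -> atleast j M -> atleast j J) /\ (forall t, S t -> J t).
Proof.
move=> SM [c [Hc ScH]].
have [s0 [nd0 H0]] : exists s0, NoDup s0 /\ (forall x, In x s0 <-> In x c /\ S x).
  elim: c {Hc ScH} => [|a c [s [nds Hs]]].
    by exists nil; split; [constructor| move=> x; simpl; tauto].
  case: (classic (S a /\ ~ In a s)) => [[Sa nIa]|nH].
    exists (a :: s); split; first by constructor.
    move=> x /=; rewrite Hs; split.
      by case=> [<-|[]]; tauto.
    by case=> [[<-|Ic] Sx]; tauto.
  exists s; split=> // x /=; rewrite Hs; split; first tauto.
  case=> [[<-|Ic] Sx]; last tauto.
  by apply/Hs; case: (classic (In a s)) => // nI; exfalso; apply: nH.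
have L0 : (length s0 <= length c)%coq_nat.
  apply: NoDup_incl_length => // x /H0 []//.
have claim : forall d, length s0 + d <= k ->
  (exists s, NoDup s /\ length s = length s0 + d /\ (forall x, In x s -> M x) /\
             (forall x, S x -> In x s)) \/ atmost k M.
  elim=> [|d IH] Hd.
    left; exists s0; split=> //; split; first lia; split.
      by move=> x /H0 [] _ /SM.
    by move=> x Sx; apply/H0; split=> //; apply: ScH.
  have [[s [nds [Ls [sM Ss]]]]|] := IH (ltac:(lia)); last by right.
  case: (classic (exists x, M x /\ ~ In x s)) => [[x [Mx nIx]]|nE].
    left; exists (x :: s); split; first by constructor.
    split; first by rewrite /= Ls; lia.
    split; first by move=> y /= [<-|/sM].
    by move=> y /Ss /= ; tauto.
  right; exists s; split; first lia.
  by move=> x Mx; apply: NNPP => nI; apply: nE; exists x.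
have [[s [nds [Ls [sM Ss]]]]|aM] := claim (k - length s0) ltac:(lia).
  exists (fun x => In x s); split=> //; split.
    by exists s; split=> //; lia.
  split=> //.
  move=> j jk _; exists (firstn j s); split.
    by rewrite firstn_length_le //; lia.
  have E := firstn_skipn j s.
  split.
    by apply: (@NoDup_app_remove_r _ _ (skipn j s)); rewrite E.
  by move=> x Ix; rewrite -E; apply: in_or_app; left.
exists M; split=> //; split=> //; split=> // t St; exact: SM.
Qed.

Section Main.
Variable Sch : schema.
Variable D : Type.
Local Notation sg := (ssig Sch).
Local Notation tupm m := (@tup sg D (mrel m)).
Local Notation inst := (@instance sg D).

Lemma valid_ext (I : inst) m (b : binding D m) (S : tupm m -> Prop) :
  (forall t, S t -> matching I b t) ->
  (forall k, mbound m = Some k -> atmost k S) ->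
  exists J, valid_output I b J /\ (forall t, S t -> J t).
Proof.
move=> SM Sk; rewrite /valid_output; case E: (mbound m) => [k|].
  have [J [JM [Jk [Jl SJ]]]] := @gen_ext _ _ _ _ SM (Sk k E).
  by exists J; split.
by exists (matching I b); split.
Qed.

Lemma choiceF (P : forall m : Meth Sch, binding D m -> (tupm m -> Prop) -> Prop) :
  (forall m (b : binding D m), exists J, P m b J) ->
  exists sigma : selection Sch D, forall m b, P m b (sigma m b).
Proof.
move=> H.
exists (fun m b => proj1_sig (constructive_indefinite_description _ (H m b))).
move=> m b; exact: proj2_sig.
Qed.

Lemma Adom_sub (I J : inst) : subinst I J -> forall v, Adom I v -> Adom J v.
Proof. by move=> IJ v [f [i [If e]]]; exists f, i; split=> //; apply: IJ. Qed.

Lemma AccPart_sub (I : inst) sigma : valid_selection I sigma ->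
  forall n f, AccPart sigma n f -> I f.
Proof.
move=> v; elim=> [|n IH] f //= [m [b [t [hb [st ->]]]]].
have hb' : binding_in (Adom I) b by move=> i; exact: (@Adom_sub _ I IH _ (hb i)).
by have [/(_ t st) [] ] := v m b hb'.
Qed.

Lemma AccPart_S (sigma : selection Sch D) n (f : fact sg D) : AccPart sigma n f -> AccPart sigma n.+1 f.
Proof.
elim: n f => [|n IH] f //= [m [b [t [hb [st ->]]]]].
exists m, b, t; split=> //.
by move=> i; exact: (@Adom_sub _ (AccPart sigma n.+1) IH (b i) (hb i)).
Qed.

Lemma AccPart_le (sigma : selection Sch D) n n' (f : fact sg D) : n <= n' -> AccPart sigma n f -> AccPart sigma n' f.
Proof.
elim: n' => [|n' IH].
  by rewrite leqn0 => /eqP ->.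
rewrite leq_eqVlt => /orP [/eqP -> //| lt] h.
by apply: AccPart_S; apply: IH.
Qed.

Lemma bind_fin (sigma : selection Sch D) (m : Meth Sch) (b : binding D m) :
  binding_in (Adom (accessible_of sigma)) b ->
  exists n, binding_in (Adom (AccPart sigma n)) b.
Proof.
move=> hb.
suff HH : forall l : list {i : 'I_(@arity sg (mrel m)) | i \in minp m},
  exists n, forall i, i \in l -> Adom (AccPart sigma n) (b i).
  have [n Hn] := HH (enum predT).
  by exists n => i; apply: Hn; rewrite mem_enum.
elim=> [|i l [n IH]]; first by exists 0.
have [f [j [[n' Hf] e]]] := hb i.
exists (maxn n n') => i'; rewrite inE => /orP [/eqP ->|il].
  exists f, j; split=> //; exact: (AccPart_le _ _ _ _ (leq_maxr n n') Hf).
refine (@Adom_sub (AccPart sigma n) _ _ _ (IH _ il)) => g.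
exact: (AccPart_le _ _ _ _ (leq_maxl n n')).
Qed.


Lemma main_aux (Q : bcq sg) :
  @AMonDet Sch D Q <->
  (forall I1 I2 : instance sg D,
     @satisfies Sch D I1 -> @satisfies Sch D I2 ->
     forall Iacc : instance sg D,
       subinst Iacc I1 -> subinst Iacc I2 -> @access_valid Sch D I1 Iacc ->
       cq_holds I1 Q -> cq_holds I2 Q).
Proof.
split.
- move=> AM I1 I2 s1 s2 Iacc sub1 sub2 [_ av] q1.
  apply: (AM I1 I2 s1 s2) => //.
  have HHJf : forall m (b : binding D m), exists J,
      binding_in (Adom Iacc) b ->
      (forall t, J t -> Iacc (@Fact sg D (mrel m) t)) /\ valid_output I1 b (J).
    move=> m b.
    case: (classic (binding_in (Adom Iacc) b)) => [hb|nb].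
      have [J HJ] := av m b hb; by exists J.
    by exists (fun _ => False).
  have [Jf HJf] := choiceF _ HHJf.
  have HHs1' : forall m (b : binding D m), exists J,
      (binding_in (Adom I1) b -> valid_output I1 b (J)) /\
      (binding_in (Adom Iacc) b -> J = Jf m b).
    move=> m b.
    case: (classic (binding_in (Adom Iacc) b)) => [hb|nb].
      by exists (Jf m b); split=> // _; case: (HJf m b hb).
    have [J [vJ _]] := @valid_ext I1 m b (fun _ => False) (fun _ (f : False) => match f with end)
       (fun k _ => ex_intro _ nil (conj (leq0n k) (fun _ (f : False) => match f with end))).
    by exists J; split=> // /nb.
  have [s1' Hs1] := choiceF _ HHs1'.
  have HHs2' : forall m (b : binding D m), exists J,
      (binding_in (Adom I2) b -> valid_output I2 b (J)) /\
      (binding_in (Adom Iacc) b -> forall t, Jf m b t -> J t).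
    move=> m b.
    case: (classic (binding_in (Adom Iacc) b)) => [hb|nb].
      have [JI [JM Jk]] := HJf m b hb.
      have [J [vJ SJ]] := @valid_ext I2 m b (Jf m b)
        (fun t Jt => conj (sub2 _ (JI t Jt)) (proj2 (JM t Jt)))
        (fun k E => ltac:(by move: Jk; rewrite E => -[])).
      by exists J; split.
    have [J [vJ _]] := @valid_ext I2 m b (fun _ => False) (fun _ (f : False) => match f with end)
       (fun k _ => ex_intro _ nil (conj (leq0n k) (fun _ (f : False) => match f with end))).
    by exists J; split=> // /nb.
  have [s2' Hs2] := choiceF _ HHs2'.
  have claim : forall n, (forall f, AccPart s1' n f -> Iacc f) /\
                         (forall f, AccPart s1' n f -> AccPart s2' n f).
    elim=> [|n [IH1 IH2]]; first by split.
    have H : forall f, AccPart s1' n.+1 f -> Iacc f /\ AccPart s2' n.+1 f.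
      move=> f [m [b [t [hb [st ->]]]]].
      have hb' : binding_in (Adom Iacc) b.
        by move=> i; exact: (@Adom_sub _ Iacc IH1 _ (hb i)).
      have e := (Hs1 m b).2 hb'.
      rewrite e in st.
      split; first by have [] := HJf m b hb'; move=> /(_ t st).
      exists m, b, t; split; last split=> //.
        by move=> i; exact: (@Adom_sub _ (AccPart s2' n) IH2 _ (hb i)).
      exact: ((Hs2 m b).2 hb').
    by split=> f /H [].
  exists (accessible_of s1'), (accessible_of s2'); split; last split.
  + exists s1'; split=> // m b hb; exact: ((Hs1 m b).1 hb).
  + exists s2'; split=> // m b hb; exact: ((Hs2 m b).1 hb).
  + by move=> f [n Hf]; exists n; apply: (claim n).2.
- move=> H I1 I2 s1 s2 [A1 [A2 [[sg1 [v1 e1]] [[sg2 [v2 e2]] sub]]]] q1.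
  have A1I1 : subinst A1 I1.
    by move=> f /e1 [n Hf]; exact: (AccPart_sub _ _ v1 _ _ Hf).
  have A1I2 : subinst A1 I2.
    by move=> f /sub /e2 [n Hf]; exact: (AccPart_sub _ _ v2 _ _ Hf).
  apply: (H I1 I2 s1 s2 A1 A1I1 A1I2) => //.
  split=> // m b hb.
  have hb2 : binding_in (Adom (accessible_of sg1)) b.
    move=> i; have [f [j [Af e]]] := hb i.
    by exists f, j; split=> //; apply/e1.
  have [n Hn] := bind_fin _ _ _ hb2.
  exists (sg1 m b); split.
    move=> t st; apply/e1; exists n.+1; exists m, b, t; split=> //.
  apply: v1 => i; exact: (@Adom_sub _ I1 A1I1 _ (hb i)).
Qed.

End Main.

Theorem mainTheorem3 (D : Type) (Sch : schema) (Q : bcq (ssig Sch)) :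
  @AMonDet Sch D Q <->
  (forall I1 I2 : instance (ssig Sch) D,
     @satisfies Sch D I1 -> @satisfies Sch D I2 ->
     forall Iacc : instance (ssig Sch) D,
       subinst Iacc I1 -> subinst Iacc I2 -> @access_valid Sch D I1 Iacc ->
       cq_holds I1 Q -> cq_holds I2 Q).
Proof. exact: main_aux. Qed.
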